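(* Let $n\ge1$, $E,m\ge1$, and let $F:\{0,1\}^n\to\mathbb{F}^E_m\cap[0,1]$ be nondecreasing with respect to the lexicographic order $<_{\mathrm{dict}}$ with $F(1^n)=1$. Let $P_F(b):=F(b)-F(b^-)$ for $b\in\{0,1\}^n$, where $b^-$ is the lexicographic predecessor of $b$ and $F((0^n)^-):=0$. Define $p_F:\{0,1\}^*\to[0,1]$ by $p_F(b):=F(b1^{n-|b|})-F((b0^{n-|b|})^-)$ for $|b|\le n$ (exact real subtraction), and $p_F(bb'):=p_F(b)\,\mathbf{1}[b'=0\ldots0]$ for $b\in\{0,1\}^n$ and nonempty $b'\in\{0,1\}^+$. Then $p_F$ is a binary-coded probability distribution and $p_F(b)=P_F(b)$ for all $b\in\{0,1\}^n$.
   Context: $\mathbb{F}^E_m\cap[0,1]$ denotes the set of real numbers in $[0,1]$ exactly representable as IEEE-754-style floating-point numbers with $E$ exponent bits and $m$ mantissa bits (subnormals included). A binary-coded probability distribution is a map $p:\{0,1\}^*\to[0,1]$ with $p(\varepsilon)=1$ and $p(b)=p(b0)+p(b1)$ for every finite binary string $b$ ($\varepsilon$ the empty string). *)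

(* Defs.v *)
From HB Require Import structures.
From mathcomp Require Import all_boot all_order all_algebra.
From mathcomp Require Import reals.
Set Implicit Arguments. Unset Strict Implicit. Unset Printing Implicit Defensive.
Import Order.TTheory GRing.Theory Num.Theory.
Local Open Scope ring_scope.

(* exponent bias 2^(E-1) - 1; biased exponent field in [0, 2^E - 1];
   field 2^E - 1 is reserved (inf/NaN); field 0 encodes zero/subnormals. *)
Definition float_bias (E : nat) : nat := (2 ^ E.-1).-1.
Definition float_emin (E : nat) : int := 1 - (float_bias E)%:Z.
Definition float_emax (E : nat) : int := (float_bias E)%:Z.

Definition is_float {R : realType} (E m : nat) (x : R) : Prop :=
  exists (s : bool) (f : nat), (f < 2 ^ m)%N /\
    (
      x = (-1) ^+ s * f%:R * (2%:R : R) ^ (float_emin E - m%:Z)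
    \/
      exists e : int, float_emin E <= e <= float_emax E /\
        x = (-1) ^+ s * (2 ^ m + f)%:R * (2%:R : R) ^ (e - m%:Z)).

Fixpoint lexlt (s t : seq bool) : bool :=
  match s, t with
  | x :: s', y :: t' => (~~ x && y) || ((x == y) && lexlt s' t')
  | _, _ => false
  end.
Definition lexle (s t : seq bool) : bool := (s == t) || lexlt s t.

(* F(b^-): value of F at the lexicographic predecessor of b,
   with the convention F((0^n)^-) := 0 (no predecessor). *)
Definition Fpred {R : realType} (n : nat) (F : n.-tuple bool -> R)
  (b : n.-tuple bool) : R :=
  match [pick c : n.-tuple bool | lexlt c b &&
           [forall d : n.-tuple bool, lexlt d b ==> lexle d c]] with
  | Some c => F c
  | None => 0
  end.

Definition PF {R : realType} (n : nat) (F : n.-tuple bool -> R)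
  (b : n.-tuple bool) : R := F b - Fpred F b.

Definition ext (n : nat) (b : seq bool) (x : bool) : n.-tuple bool :=
  insubd (nseq_tuple n x) (b ++ nseq (n - size b) x).

Definition pF {R : realType} (n : nat) (F : n.-tuple bool -> R)
  (b : seq bool) : R :=
  if (size b <= n)%N then F (ext n b true) - Fpred F (ext n b false)
  else if all (fun x => ~~ x) (drop n b) then
    F (ext n (take n b) true) - Fpred F (ext n (take n b) false)
  else 0.

Definition binary_distribution {R : realType} (p : seq bool -> R) : Prop :=
  (forall b, 0 <= p b <= 1) /\ p [::] = 1 /\
  (forall b, p b = p (rcons b false) + p (rcons b true)).

(* Main.v *)
Require Import Defs.
From HB Require Import structures.
From mathcomp Require Import all_boot all_order all_algebra.
From mathcomp Require Import reals.
Import Order.TTheory GRing.Theory Num.Theory.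
Local Open Scope ring_scope.

Lemma lexlt_nseq0 s k : lexlt s (nseq k false) = false.
Proof. by elim: s k => [|x s IH] [|k] //=; rewrite IH andbF andbF. Qed.

Lemma lexlt_asym s t : lexlt s t -> ~~ lexlt t s.
Proof. by elim: s t => [|x s IH] [|y t] //=; case: x; case: y => //=; exact: IH. Qed.

Lemma lexle_cons x s t : lexle (x :: s) (x :: t) = lexle s t.
Proof. by rewrite /lexle /= eqseq_cons eqxx; case: x. Qed.

Lemma lt_pred b k : lexlt (b ++ false :: nseq k true) (b ++ true :: nseq k false).
Proof. by elim: b => //= x b ->; rewrite eqxx orbT. Qed.

Lemma le_ones d k : size d = k -> lexle d (nseq k true).
Proof.
elim: d k => [|x d IH] [|k] //=; try by rewrite /lexle.
move=> [/IH]; case: x => H; first by rewrite lexle_cons.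
by rewrite /lexle /=.
Qed.

Lemma below_pred b k d : size d = (size b + k.+1)%N ->
  lexlt d (b ++ true :: nseq k false) -> lexle d (b ++ false :: nseq k true).
Proof.
elim: b d => [|y b IH] [|x d] //=.
  move=> [Hs]; rewrite lexlt_nseq0 andbF orbF andbT => /negbTE ->.
  by rewrite lexle_cons; apply: le_ones.
move=> [Hs] /orP [H|/andP [/eqP -> H]].
  by rewrite /lexle /= H orbT.
by rewrite lexle_cons; apply: IH.
Qed.

Lemma le_ext b k : lexle (b ++ nseq k false) (b ++ nseq k true).
Proof.
elim: b => [|x b IH]; last by rewrite /= lexle_cons.
by case: k => [|k]; rewrite /lexle //= orbT.
Qed.

Lemma lexle_antisym n (c d : n.-tuple bool) : lexle c d -> lexle d c -> c = d.
Proof.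
rewrite /lexle; case/orP => [/eqP/val_inj //|H1]; case/orP => [/eqP/val_inj //|H2].
by move: (@lexlt_asym _ _ H1); rewrite H2.
Qed.

Lemma Fpred_succ (R : realType) n (F : n.-tuple bool -> R) (c t : n.-tuple bool) :
  lexlt c t -> (forall d : n.-tuple bool, lexlt d t -> lexle d c) -> Fpred F t = F c.
Proof.
move=> Hct Hall; rewrite /Fpred; case: pickP => [c' /andP [H1 /forallP H2]| H].
  have H3 := implyP (H2 c) Hct.
  by rewrite (@lexle_antisym _ _ _ (Hall _ H1) H3).
have := H c; rewrite Hct /= => /negbT /negP; case.
by apply/forallP => d; apply/implyP; exact: Hall.
Qed.

Lemma Fpred_zero (R : realType) n (F : n.-tuple bool -> R) (t : n.-tuple bool) :
  (forall d : n.-tuple bool, lexlt d t = false) -> Fpred F t = 0.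
Proof.
by move=> H; rewrite /Fpred; case: pickP => [c /andP [H1 _]|//]; rewrite H in H1.
Qed.

Lemma Fpred_le (R : realType) n (F : n.-tuple bool -> R) (t : n.-tuple bool) :
  (forall b c : n.-tuple bool, lexle b c -> F b <= F c) ->
  (forall b, 0 <= F b) -> 0 <= Fpred F t <= F t.
Proof.
move=> Hm H0; rewrite /Fpred; case: pickP => [c /andP [H1 _]|_].
  by rewrite H0 /=; apply: Hm; rewrite /lexle H1 orbT.
by rewrite lexx H0.
Qed.

Lemma ext_val n b x : (size b <= n)%N ->
  val (ext n b x) = b ++ nseq (n - size b) x.
Proof.
by move=> H; rewrite /ext val_insubd size_cat size_nseq subnKC // eqxx.
Qed.

Theorem proposition5p13 (R : realType) (n E m : nat)
  (F : n.-tuple bool -> R) :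
  (1 <= n)%N -> (1 <= E)%N -> (1 <= m)%N ->
  (forall b, is_float E m (F b) /\ 0 <= F b <= 1) ->
  (forall b c : n.-tuple bool, lexle b c -> F b <= F c) ->
  F (nseq_tuple n true) = 1 ->
  binary_distribution (pF F) /\ (forall b : n.-tuple bool, pF F b = PF F b).
Proof.
move=> _ _ _ HF Hm H1.
have H0 b : 0 <= F b by case: (HF b) => _ /andP [].
have H1' b : F b <= 1 by case: (HF b) => _ /andP [].
pose q b := F (ext n b true) - Fpred F (ext n b false).
have pFE b : pF F b = if (size b <= n)%N then q b
   else if all (fun x => ~~ x) (drop n b) then q (take n b) else 0 by [].
have qb b : (size b <= n)%N -> 0 <= q b <= 1.
  move=> Hb; rewrite /q subr_ge0; case/andP: (@Fpred_le R n F (ext n b false) Hm H0) => Ha Hb'.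
  apply/andP; split; last by rewrite lerBlDr (le_trans (H1' _)) // lerDl.
  apply: (le_trans Hb'); apply: Hm; rewrite !ext_val //.
  exact: le_ext.
split; last first.
  move=> b; rewrite pFE size_tuple leqnn /q /PF.
  have He : forall x, ext n b x = b.
    by move=> x; apply: val_inj; rewrite ext_val ?size_tuple // subnn cats0.
  by rewrite !He.
split; [|split].
- move=> b; rewrite pFE; case: ifP => Hb; first exact: qb.
  case: ifP => _; last by rewrite lexx ler01.
  apply: qb; rewrite size_take; by case: ifP => // /negbT; rewrite -leqNgt.
- rewrite pFE /= /q.
  have -> : ext n [::] true = nseq_tuple n true.
    by apply: val_inj; rewrite ext_val //= subn0.
  rewrite H1 Fpred_zero ?subr0 // => d; rewrite ext_val //= subn0.
  exact: lexlt_nseq0.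
- move=> b; case: (ltngtP (size b) n) => Hb.
  + rewrite !pFE !size_rcons Hb (ltnW Hb) /q.
    have [k Hk] : exists k, (n - size b)%N = k.+1.
      by exists (n - size b).-1; rewrite prednK // subn_gt0.
    have Hk' : (n - (size b).+1)%N = k by rewrite subnS Hk.
    have E1 : ext n (rcons b true) true = ext n b true.
      by apply: val_inj; rewrite !ext_val ?size_rcons ?(ltnW Hb) // Hk' Hk cat_rcons.
    have E2 : ext n (rcons b false) false = ext n b false.
      by apply: val_inj; rewrite !ext_val ?size_rcons ?(ltnW Hb) // Hk' Hk cat_rcons.
    have E3 : Fpred F (ext n (rcons b true) false) = F (ext n (rcons b false) true).
      apply: Fpred_succ.
        by rewrite !ext_val ?size_rcons // !Hk' !cat_rcons lt_pred.
      move=> d; rewrite !ext_val ?size_rcons // !Hk' !cat_rcons; apply: below_pred.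
      by rewrite size_tuple -Hk subnKC // ltnW.
    rewrite E1 E2 E3.
    by rewrite [RHS]addrC addrA subrK.
  + have Hb1 : (size b <= n)%N = false by rewrite leqNgt Hb.
    have Hb2 : (size b < n)%N = false by rewrite ltnNge ltnW.
    rewrite !pFE !size_rcons Hb1 Hb2 !drop_rcons ?(ltnW Hb) // !all_rcons /=.
    rewrite -!cats1 !takel_cat ?(ltnW Hb) //.
    by rewrite addr0.
  + rewrite !pFE !size_rcons Hb leqnn ltnn -!cats1 -Hb drop_size_cat //
      take_size_cat // drop_size_cat //=.
    by rewrite addr0.
Qed.
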